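(* Let $V$ be a finite set with $|V|=n$, let $d$ be a monotone and consistent symmetric set function on $V$, let $\tau\in\mathbb{R}$, and let $v_1,\dots,v_n$ be a lax-back order with threshold $\tau$ for $(V,d)$. Then for every $2\leq i\leq n$, $$\min\{\tau,\lambda_{(V,d)}(v_{i-1},v_i)\}\geq\min\{\tau, d(v_i,\{v_1,\dots,v_{i-1}\})\}.$$
   Context: A symmetric set function $d$ on a finite set $V$ assigns a real number $d(S,T)$ to every ordered pair $(S,T)$ of disjoint subsets of $V$, such that $d(S,T)=d(T,S)$. It is monotone if $d(S,T')\leq d(S,T)$ whenever $S,T$ are disjoint and $T'\subseteq T$; consistent if for all pairwise disjoint $R,S,T$, $d(S,R)\geq d(T,R)$ implies $d(S,R\cup T)\geq d(S\cup R,T)$. For $s,t\in V$, $\lambda_{(V,d)}(s,t)=\min\{d(S,V\setminus S)\mid s\in S\subseteq V,\ t\notin S\}$. Singletons $\{v\}$ are written $v$. An ordering $v_1,\dots,v_n$ of $V$ is a lax-back order with threshold $\tau$ for $(V,d)$ if $\min\{\tau,d(v_i,\{v_1,\dots,v_{i-1}\})\}\geq\min\{\tau,d(v_j,\{v_1,\dots,v_{i-1}\})\}$ for all $1\leq i<j\leq n$. *)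

(* Defs.v *)
From mathcomp Require Import all_boot all_order all_algebra.
Set Implicit Arguments. Unset Strict Implicit. Unset Printing Implicit Defensive.
Import Order.TTheory GRing.Theory Num.Theory.
Local Open Scope ring_scope.

(* A set function on V: d S T is meaningful for disjoint S, T. *)
Section SetFun.
Variables (V : finType) (R : realFieldType) (d : {set V} -> {set V} -> R).

Definition symmetric_sf : Prop :=
  forall S T : {set V}, [disjoint S & T] -> d S T = d T S.

Definition monotone_sf : Prop :=
  forall S T T' : {set V}, [disjoint S & T] -> T' \subset T -> d S T' <= d S T.

Definition consistent_sf : Prop :=
  forall R0 S T : {set V},
    [disjoint R0 & S] -> [disjoint R0 & T] -> [disjoint S & T] ->
    d T R0 <= d S R0 -> d (S :|: R0) T <= d S (R0 :|: T).

(* lambda_{(V,d)}(s,t) = min { d(S, V \ S) | s \in S, t \notin S }.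
   The seed d [set s] (~: [set s]) is itself a feasible value whenever s != t,
   so the big min is the true minimum in that case. *)
Definition lambda_sf (s t : V) : R :=
  \big[Order.min/d [set s] (~: [set s])]_(S : {set V} | (s \in S) && (t \notin S))
     d S (~: S).

(* prefix {v_1, ..., v_i} (1-based) = images of the 0-based indices k < i *)
Definition vprefix n (v : 'I_n -> V) (i : nat) : {set V} :=
  [set v k | k : 'I_n & (k < i)%N].

Definition lax_back n (v : 'I_n -> V) (tau : R) : Prop :=
  forall i j : 'I_n, (i < j)%N ->
    Order.min tau (d [set v j] (vprefix v i)) <= Order.min tau (d [set v i] (vprefix v i)).

End SetFun.

(* Main.v *)
Require Import Defs.
From mathcomp Require Import all_boot all_order all_algebra.
Import Order.TTheory GRing.Theory Num.Theory.
Local Open Scope ring_scope.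

Section Aux.
Variables (R : realFieldType) (V : finType) (d : {set V} -> {set V} -> R)
  (tau : R) (v : 'I_#|V| -> V).
Hypotheses (sym0 : symmetric_sf d) (mono0 : monotone_sf d) (cons0 : consistent_sf d)
  (vinj : injective v) (vsurj : forall x, exists a, x = v a)
  (lax : lax_back d v tau).

Let mono {S T T'} := mono0 S T T'.
Let sym {S T} := sym0 S T.
Let cons {R0 S T} := cons0 R0 S T.

Lemma disjP (A B : {set V}) :
  (forall a, v a \in A -> v a \in B -> False) -> [disjoint A & B].
Proof.
move=> H; apply/pred0P => x /=; have [a ->] := vsurj x.
by apply/negbTE/negP => /andP[/H h /h].
Qed.

Lemma subP (A B : {set V}) :
  (forall a, v a \in A -> v a \in B) -> A \subset B.
Proof. by move=> H; apply/subsetP => x; have [a ->] := vsurj x; apply: H. Qed.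

Lemma eqsP (A B : {set V}) :
  (forall a, (v a \in A) = (v a \in B)) -> A = B.
Proof. by move=> H; apply/setP => x; have [a ->] := vsurj x; apply: H. Qed.

Lemma memP a m : (v a \in vprefix v m) = (a < m)%N.
Proof.
rewrite /vprefix; apply/imsetP/idP => [[b]|h].
  by rewrite inE => hb /vinj ->.
by exists a; rewrite ?inE.
Qed.

Lemma mono2 (S T S' T' : {set V}) : [disjoint S & T] -> S' \subset S -> T' \subset T ->
  d S' T' <= d S T.
Proof.
move=> dST sS sT.
have dS'T : [disjoint S' & T] by apply: disjointWl dST.
apply: le_trans (mono dS'T sT) _.
rewrite sym // (sym dST); apply: mono => //; by rewrite disjoint_sym.
Qed.

Lemma claim N : forall (k k1 : 'I_#|V|) (C : {set V}), (k < N)%N -> k1.+1 = k :> nat ->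
  v k \in C -> v k1 \notin C ->
  Order.min tau (d [set v k] (vprefix v k)) <=
  Order.min tau (d (vprefix v k.+1 :&: C) (vprefix v k.+1 :\: C)).
Proof.
elim: N => [//|N IH] k k1 C kN k1k vkC vk1C.
case: (pickP (fun m : 'I_#|V| => (m < k)%N && (v m \in C))) => [m0 Hm0 | none]; last first.
  have E1 : vprefix v k.+1 :&: C = [set v k].
    apply: eqsP => a; rewrite !inE memP (inj_eq vinj).
    case: (eqVneq a k) => [->|ne]; first by rewrite ltnSn vkC.
    have := none a; rewrite /= => nak.
    have nak' : (nat_of_ord a == nat_of_ord k) = false by rewrite val_eqE; apply/negbTE.
    by rewrite ltnS leq_eqVlt nak' /= nak.
  have E2 : vprefix v k.+1 :\: C = vprefix v k.
    apply: eqsP => a; rewrite !inE !memP.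
    case: (eqVneq a k) => [->|ne]; first by rewrite vkC ltnn.
    have := none a; rewrite /= => nak.
    have nak' : (nat_of_ord a == nat_of_ord k) = false by rewrite val_eqE; apply/negbTE.
    rewrite ltnS leq_eqVlt nak' /=.
    by move: nak; case: (a < k)%N; case: (v a \in C).
  by rewrite E1 E2.
case: (@arg_maxnP _ m0 (fun m : 'I_#|V| => (m < k)%N && (v m \in C)) (@nat_of_ord _) Hm0) => m /andP[mk vmC] maxm.
have mk1 : m != k1 by apply/eqP => e; move: vk1C; rewrite -e vmC.
have mk' : (m.+1 < k)%N.
  rewrite -k1k ltnS ltn_neqAle; move: mk; rewrite -k1k ltnS => ->.
  by rewrite andbT.
have k'n : (m.+1 < #|V|)%N by apply: ltn_trans mk' (ltn_ord k).
pose k' := Ordinal k'n.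
have vk'C : v k' \notin C.
  apply/negP => h; have := maxm k'; rewrite /= h andbT.
  by move=> /(_ mk'); rewrite /= ltnn.
have IHk := IH k' m (~: C) (leq_trans mk' kN) erefl.
rewrite !inE vk'C vmC /= in IHk; have {IHk} IHk := IHk isT isT.
have nk : v k \notin vprefix v k by rewrite memP ltnn.
set Y := vprefix v k :&: C.
set W := vprefix v k :\: C.
have dYW : [disjoint Y & W].
  by apply: disjP => a; rewrite !inE => /andP[_ ->] /andP[].
have dWk : [disjoint W & [set v k]].
  by apply: disjP => a; rewrite !inE memP => /andP[_ h] /eqP/vinj e; rewrite e ltnn in h.
have dYk : [disjoint Y & [set v k]].
  by apply: disjP => a; rewrite !inE memP => /andP[h _] /eqP/vinj e; rewrite e ltnn in h.
have EX : vprefix v k.+1 :&: C = Y :|: [set v k].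
  apply: eqsP => a; rewrite !inE !memP (inj_eq vinj).
  case: (eqVneq a k) => [->|ne]; first by rewrite ltnSn ltnn vkC ?eqxx ?orbT.
  have nak' : (nat_of_ord a == nat_of_ord k) = false by rewrite val_eqE; apply/negbTE.
  by rewrite orbF ltnS leq_eqVlt nak'.
have EY : vprefix v k.+1 :\: C = W.
  apply: eqsP => a; rewrite !inE !memP.
  case: (eqVneq a k) => [->|ne]; first by rewrite vkC.
  have nak' : (nat_of_ord a == nat_of_ord k) = false by rewrite val_eqE; apply/negbTE.
  by rewrite ltnS leq_eqVlt nak'.
have EP : W :|: Y = vprefix v k by rewrite setUC setID.
rewrite EX EY.
have L1 := lax k' k mk'.
have L2 : d [set v k] Y <= d [set v k] (vprefix v k').
  apply: mono.
    apply: disjP => a; rewrite !inE memP => /eqP/vinj -> h.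
    by rewrite /= ltnNge (ltnW mk') in h.
  apply: subP => a; rewrite !inE !memP /= => /andP[ak aC].
  by have := maxm a; rewrite /= ak aC ltnS => /(_ isT).
have L3 : d (vprefix v k'.+1 :&: ~: C) (vprefix v k'.+1 :\: ~: C) <= d W Y.
  rewrite sym; last by apply: disjP => a; rewrite !inE => /andP[_ ->] /andP[].
  rewrite [d W Y]sym; last by rewrite disjoint_sym.
  apply: mono2 => //; apply: subP => a; rewrite !inE ?negbK !memP => /andP[h1 h2];
    first [by rewrite h1 (leq_trans h2 mk') | by rewrite h2 (leq_trans h1 mk')].
have L4 : Order.min tau (d [set v k] Y) <= Order.min tau (d W Y).
  apply: le_trans (le_min2 (le_refl tau) L2) _.
  apply: le_trans L1 _.
  apply: le_trans IHk _.
  exact: le_min2 (le_refl tau) L3.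
have dWYk : [disjoint W & Y :|: [set v k]].
  apply: disjP => a; rewrite !inE !memP => /andP[h1 h2] /orP[/andP[_ h3]|/eqP/vinj e].
    by rewrite h3 in h1.
  by rewrite e ltnn in h2.
have e1 : d [set v k] (vprefix v k) = d (vprefix v k) [set v k].
  by apply: sym; rewrite disjoints1.
have e2 : d (Y :|: [set v k]) W = d W (Y :|: [set v k]).
  by apply: sym; rewrite disjoint_sym.
rewrite e2.
case: (leP (d [set v k] Y) (d W Y)) => h.
  have H1 := cons dYW dYk dWk h.
  rewrite EP -e1 in H1.
  exact: le_min2.
have tW : tau <= d W Y.
  move: L4; rewrite !le_min !ge_min le_refl /= => /orP[//|h2].
  by rewrite ltNge h2 in h.
have h2 := mono dWYk (subsetUl Y [set v k]).
apply: le_trans (_ : _ <= tau) _; first by rewrite ge_min le_refl.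
by rewrite le_min le_refl (le_trans tW h2).
Qed.

End Aux.

Theorem lemma5 (R : realFieldType) (V : finType) (d : {set V} -> {set V} -> R)
  (tau : R) (v : 'I_#|V| -> V) :
  symmetric_sf d -> monotone_sf d -> consistent_sf d ->
  bijective v -> lax_back d v tau ->
  forall (i j : 'I_#|V|), (1 <= i)%N -> nat_of_ord j = i.-1 ->
    Order.min tau (d [set v i] (vprefix v i)) <= Order.min tau (lambda_sf d (v j) (v i)).
Proof.
move=> sym mono cons [g vK gK] lax i j i1 ji.
have vinj : injective v := can_inj vK.
have vsurj : forall x, exists a, x = v a by move=> x; exists (g x); rewrite gK.
set c := Order.min tau (d [set v i] (vprefix v i)).
have key : forall S : {set V}, v j \in S -> v i \notin S -> c <= d S (~: S).
  move=> S jS iS.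
  have ji' : j.+1 = i :> nat by rewrite ji prednK.
  have H := @claim R V d tau v sym mono cons vinj vsurj lax i.+1 i j (~: S) (ltnSn i) ji'
    (ltac:(by rewrite inE)) (ltac:(by rewrite inE negbK)).
  apply: le_trans H _.
  rewrite ge_min; apply/orP; right.
  rewrite (sym _ (vprefix v i.+1 :\: ~: S)); last first.
    by apply/pred0P => x /=; rewrite !inE; case: (x \in S); rewrite ?andbF.
  apply: (@mono2 R V d sym mono).
  - by apply/pred0P => x /=; rewrite !inE; case: (x \in S).
  - by apply/subsetP => x; rewrite !inE negbK => /andP[].
  - by apply/subsetP => x; rewrite !inE => /andP[].
rewrite le_min ge_min le_refl /=.
rewrite /lambda_sf; apply: (big_ind (fun x => c <= x)).
- apply: key; first by rewrite inE.
  rewrite inE (inj_eq vinj); apply/negP => /eqP e.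
  by move: (ltn_predL i); rewrite i1 -ji e ltnn.
- by move=> x y hx hy; rewrite le_min hx hy.
- by move=> S /andP[]; apply: key.
Qed.
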